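(* Let $(w_i)_{i\in[n]}$ be positive weights, $W_n=w_I$ with $I$ uniform on $[n]$, $\beta\ge0$, $h\in\mathbb R$, and let $\sigma$ be distributed according to $$\mu_n(\sigma)=\frac{1}{Z_n}\exp\Big(\frac{\beta}{2n\mathbb E[W_n]}\Big(\sum_iw_i\sigma_i\Big)^2+h\sum_i\sigma_i\Big),\quad\sigma\in\{-1,1\}^n.$$ Define $$c_n(s)=\frac1n\log\mathbb E\Big[\exp\Big(s\sqrt{\tfrac{\beta}{\mathbb E[W_n]}}\sum_{i\in[n]}w_i\sigma_i\Big)\Big],$$ $$G_n(x;s)=\frac{x^2}{2}-\mathbb E\Big[\log\cosh\Big(\sqrt{\tfrac{\beta}{\mathbb E[W_n]}}W_n(x+s)+h\Big)\Big],\qquad G_n(x)=G_n(x;0).$$ Then for any constant $a\in\mathbb R$, $$c_n(s)=\frac1n\log\frac{\int_{-\infty}^\infty e^{-nG_n(\frac{x}{\sqrt n}+a;s)}\,dx}{\int_{-\infty}^\infty e^{-nG_n(\frac{x}{\sqrt n}+a)}\,dx}.$$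
   Context: In $c_n$ the expectation is under $\mu_n$; in $G_n$ the expectation is over $W_n$, i.e. $\frac1n\sum_i f(w_i)$. *)

(* Defs.v *)
From HB Require Import structures.
From mathcomp Require Import all_boot all_order all_algebra.
From mathcomp Require Import all_classical all_reals all_analysis.
Set Implicit Arguments. Unset Strict Implicit. Unset Printing Implicit Defensive.
Import Order.TTheory GRing.Theory Num.Theory.
Local Open Scope ring_scope.

Section Defs.
Variable R : realType.

Definition coshR (x : R) : R := (expR x + expR (- x)) / 2.

Definition spin (b : bool) : R := if b then 1 else -1.

Variable n : nat.
Variable w : 'I_n -> R.

Definition EW : R := (\sum_(i < n) w i) / n%:R.

Definition wmag (sigma : {ffun 'I_n -> bool}) : R := \sum_(i < n) w i * spin (sigma i).

Definition hamil (beta h : R) (sigma : {ffun 'I_n -> bool}) : R :=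
  beta / (2 * n%:R * EW) * (wmag sigma) ^+ 2 + h * \sum_(i < n) spin (sigma i).

Definition Zn (beta h : R) : R := \sum_(sigma : {ffun 'I_n -> bool}) expR (hamil beta h sigma).

Definition mu_n (beta h : R) (sigma : {ffun 'I_n -> bool}) : R :=
  expR (hamil beta h sigma) / Zn beta h.

Definition c_n (beta h s : R) : R :=
  n%:R^-1 * ln (\sum_(sigma : {ffun 'I_n -> bool})
      mu_n beta h sigma * expR (s * Num.sqrt (beta / EW) * wmag sigma)).

Definition G_n (beta h x s : R) : R :=
  x ^+ 2 / 2 - n%:R^-1 * \sum_(i < n) ln (coshR (Num.sqrt (beta / EW) * w i * (x + s) + h)).

End Defs.

(* Main.v *)
Require Import Defs.
From HB Require Import structures.
From mathcomp Require Import all_boot all_order all_algebra.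
From mathcomp Require Import all_classical all_reals all_analysis.
From mathcomp Require Import ring lra measurable_realfun normal_distribution.
Import Order.TTheory GRing.Theory Num.Theory.
Local Open Scope ring_scope.

Section Helpers.
Variable R : realType.

Lemma coshR_gt0 (z : R) : 0 < coshR z.
Proof. by rewrite /coshR divr_gt0 // addr_gt0 // expR_gt0. Qed.

Lemma prod_cosh n (z : 'I_n -> R) : \prod_(i < n) coshR (z i) =
  (2^-1)^+n * \sum_(sg : {ffun 'I_n -> bool}) expR (\sum_(i < n) spin R (sg i) * z i).
Proof.
have H i : coshR (z i) = 2^-1 * \sum_(b : bool) expR (spin R b * z i).
  by rewrite big_bool /= /spin /coshR mul1r mulN1r mulrC.
rewrite (eq_bigr _ (fun i _ => H i)) big_split /= prodr_const card_ord.
rewrite bigA_distr_bigA; congr (_ * _); apply: eq_bigr => sg _.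
by rewrite expR_sum.
Qed.

Lemma integral_nf (m : R) :
  (\int[@lebesgue_measure R]_x (normal_fun m 1 x)%:E = ((normal_peak (1:R))^-1)%:E)%E.
Proof.
have := integral_normal_pdf m (1:R).
rewrite normal_pdfE ?oner_neq0 //.
under eq_integral do rewrite EFinM.
rewrite ge0_integralZl //; last first.
- by rewrite lee_fin normal_peak_ge0.
- by move=> x _; rewrite lee_fin normal_fun_ge0.
- by apply/measurable_EFinP; exact: measurable_normal_fun.
have p0 : 0 < normal_peak (1:R) by apply: normal_peak_gt0; rewrite oner_neq0.
move: (\int[_]_x _)%E => [r| |] /=.
- move=> /eqP; rewrite -EFinM eqe => /eqP H.
  congr EFin; apply: (@mulfI _ (normal_peak (1:R))); [by rewrite gt_eqF|by rewrite H divff // gt_eqF].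
- by rewrite gt0_muley ?lte_fin.
- by rewrite gt0_muleNy ?lte_fin.
Qed.

Lemma key n (w : 'I_n -> R) beta h t a x : (0 < n)%N -> (forall i, 0 < w i) -> 0 <= beta ->
  expR (- (n%:R * G_n w beta h (x / Num.sqrt n%:R + a) t)) =
  (2^-1)^+n * \sum_(sg : {ffun 'I_n -> bool})
     expR (hamil w beta h sg + t * Num.sqrt (beta / EW w) * wmag w sg) *
     normal_fun (Num.sqrt (beta / EW w) * wmag w sg / Num.sqrt n%:R - a * Num.sqrt n%:R) 1 x.
Proof.
move=> n0 w0 b0.
have nR0 : (0 < n%:R :> R) by rewrite ltr0n.
have EW0 : 0 < EW w.
  apply: divr_gt0 => //; case: n w w0 n0 {nR0} => [//|m] w w0 _.
  rewrite big_ord_recl ltr_wpDr ?w0 // sumr_ge0 // => i _; exact/ltW.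
set r := Num.sqrt n%:R; set b' := Num.sqrt (beta / EW w).
have hr2 : r ^+ 2 = n%:R by rewrite sqr_sqrtr // ltW.
have r0 : r != 0 by rewrite gt_eqF // sqrtr_gt0.
have hb2 : b' ^+ 2 = beta / EW w by rewrite sqr_sqrtr // divr_ge0 // ltW.
rewrite /G_n mulrBr mulVKf ?gt_eqF // opprB expRD expR_sum.
rewrite (eq_bigr (fun i => coshR (b' * w i * (x / r + a + t) + h))); last first.
  by move=> i _; rewrite lnK // qualifE /= coshR_gt0.
rewrite prod_cosh -mulrA mulr_suml; congr (_ * _); apply: eq_bigr => sg _.
rewrite /normal_fun -!expRD; congr expR.
have -> : \sum_(i < n) spin R (sg i) * (b' * w i * (x / r + a + t) + h) =
   b' * (x / r + a + t) * wmag w sg + h * \sum_(i < n) spin R (sg i).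
  rewrite /wmag !mulr_sumr -big_split; apply: eq_bigr => i _ /=; ring.
have e1 : beta / (2 * n%:R * EW w) = b' ^+ 2 / (2 * r ^+ 2).
  rewrite hr2 hb2; field; rewrite ?gt_eqF //.
rewrite /hamil e1 -hr2 expr1n; field.
by rewrite r0.
Qed.

Lemma int_f n (w : 'I_n -> R) beta h t a : (0 < n)%N -> (forall i, 0 < w i) -> 0 <= beta ->
  Rintegral (@lebesgue_measure R) setT
     (fun x => expR (- (n%:R * G_n w beta h (x / Num.sqrt n%:R + a) t))) =
  (2^-1)^+n * (normal_peak (1:R))^-1 * \sum_(sg : {ffun 'I_n -> bool})
     expR (hamil w beta h sg + t * Num.sqrt (beta / EW w) * wmag w sg).
Proof.
move=> n0 w0 b0; rewrite /Rintegral.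
under eq_integral => x _ do rewrite key // EFinM -sumEFin.
rewrite ge0_integralZl //;
 try (by rewrite lee_fin exprn_ge0 // invr_ge0);
 try (by move=> x _; rewrite sume_ge0 // => sg _;
  rewrite lee_fin mulr_ge0 ?expR_ge0 ?normal_fun_ge0);
 try (by apply: emeasurable_sum => sg; apply/measurable_EFinP;
  apply: measurable_funM => //; exact: measurable_normal_fun).
rewrite ge0_integral_sum //;
 try (by move=> sg x _; rewrite lee_fin mulr_ge0 ?expR_ge0 ?normal_fun_ge0);
 try (by move=> sg; apply/measurable_EFinP;
  apply: measurable_funM => //; exact: measurable_normal_fun).
under eq_bigr => sg _.
  rewrite (_ : (fun x => _) = (fun x => (expR (hamil w beta h sg + t * Num.sqrt (beta / EW w) * wmag w sg))%:E *
     (normal_fun (Num.sqrt (beta / EW w) * wmag w sg / Num.sqrt n%:R - a * Num.sqrt n%:R) 1 x)%:E)%E); last first.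
    by apply/funext => x; rewrite EFinM.
  rewrite ge0_integralZl //;
   try (by rewrite lee_fin expR_ge0);
   try (by move=> x _; rewrite lee_fin normal_fun_ge0);
   try (by apply/measurable_EFinP; exact: measurable_normal_fun).
  rewrite integral_nf -EFinM.
  over.
rewrite sumEFin -EFinM /= -mulr_suml; ring.
Qed.
End Helpers.

Theorem lemma3p2 (R : realType) (n : nat) (w : 'I_n -> R) (beta h s a : R) :
  (0 < n)%N -> (forall i, 0 < w i) -> 0 <= beta ->
  c_n w beta h s =
  n%:R^-1 * ln (Rintegral (@lebesgue_measure R) setT
                   (fun x => expR (- (n%:R * G_n w beta h (x / Num.sqrt n%:R + a) s)))
              / Rintegral (@lebesgue_measure R) setT
                   (fun x => expR (- (n%:R * G_n w beta h (x / Num.sqrt n%:R + a) 0)))).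
Proof.
move=> n0 w0 b0; rewrite !int_f // /c_n /mu_n.
congr (_ * ln _).
set S0 := (X in _ = _ / (_ * X)).
have Z0 : Zn w beta h = S0.
  by apply: eq_bigr => sg _; rewrite !mul0r addr0.
have Zp : 0 < Zn w beta h.
  rewrite /Zn (bigD1 [ffun=> true]) //= ltr_pwDl ?expR_gt0 // sumr_ge0 // .
have C0 : (2^-1)^+n * (normal_peak (1:R))^-1 != 0.
  have p0 : 0 < normal_peak (1:R) by apply: normal_peak_gt0; exact: oner_neq0.
  have q0 : (normal_peak (1:R))^-1 != 0 by rewrite invr_eq0 gt_eqF.
  by rewrite mulf_neq0 // expf_neq0 // invr_eq0.
rewrite -Z0.
under eq_bigr => sg _ do rewrite -mulrA (mulrC (_^-1)) mulrA -expRD.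
rewrite -mulr_suml.
have aux (C S Z : R) : C != 0 -> Z != 0 -> S / Z = C * S / (C * Z).
  by move=> c0 z0; field; rewrite c0 z0.
by apply: aux => //; rewrite gt_eqF.
Qed.
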